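(* Let $A=[a_{ij}]\in\{0,1\}^{N\times N}$ be the adjacency matrix of a static contact graph (with $a_{ii}=0$), let $\kappa>0$, $\beta_a\ge 0$, and let $H=(h_1,\dots,h_N):\mathbb{R}^N\to\mathbb{R}^N$ be the center manifold map of the SAIS system in the coordinates $(\mathbf p,\mathbf r)$ described in the context (in particular each component $h_j$ is nonnegative). Then the trajectories of the reduced system \[ \dot{\hat r}_i=-\kappa\Big(1+\frac{\beta_a}{\kappa}\Big)\hat r_i\sum_{j=1}^N a_{ij}h_j(\hat{\mathbf r}),\qquad i\in\{1,\dots,N\}, \] converge asymptotically to the set \[ \Omega=\Big\{\hat{\mathbf r}\in\mathbb{R}^N:\ \hat r_i\sum_{j=1}^N a_{ij}h_j(\hat{\mathbf r})=0\ \text{for all } i\Big\}. \]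
   Context: Setting: the SAIS system $\dot p_i=\beta_0(1-p_i-q_i)\sum_j a_{ij}p_j+\beta_a q_i\sum_j a_{ij}p_j-\delta p_i$, $\dot q_i=\kappa(1-p_i-q_i)\sum_j a_{ij}p_j-\beta_a q_i\sum_j a_{ij}p_j$, with $\beta_0>0$, $\delta>0$, $\kappa>0$, $0\le\beta_a<\beta_0$, where $p_i,q_i$ are infection/alert probabilities and $a_{ij}=1$ iff $j$ is a neighbor of $i$. Define $r_i=q_i-\frac{1-p_i}{1+\beta_a/\kappa}$, $\mathbf p=(p_1,\dots,p_N)^T$, $\mathbf r=(r_1,\dots,r_N)^T$ and $\beta_{eq}=\beta_0\frac{\beta_a/\kappa}{1+\beta_a/\kappa}+\beta_a\frac{1}{1+\beta_a/\kappa}$. In these coordinates the system reads $\dot{\mathbf p}=(\beta_{eq}A-\delta I)\mathbf p+G_1(\mathbf p,\mathbf r)$, $\dot{\mathbf r}=G_2(\mathbf p,\mathbf r)$, where $G_1,G_2$ have components $g_{1,i}=-\{\beta_0+\frac{\beta_0+\beta_a}{1+\beta_a/\kappa}\}p_i\sum_j a_{ij}p_j-(\beta_0-\beta_a)r_i\sum_j a_{ij}p_j$ and $g_{2,i}=-\kappa(1+\frac{\beta_a}{\kappa})r_i\sum_j a_{ij}p_j$. When $\beta_{eq}A-\delta I$ is Hurwitz, center manifold theory gives a map $H$ with $H(\mathbf 0)=\mathbf 0$, $\nabla H(\mathbf 0)=\mathbf 0$ such that $\mathbf p=H(\mathbf r)$ is an invariant (center) manifold near the origin; since $p_i$ are probabilities,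 each $h_i$ is nonnegative. *)

(* Defs.v *)
From HB Require Import structures.
From mathcomp Require Import all_boot all_order all_algebra.
From mathcomp Require Import all_classical all_reals all_analysis.
Set Implicit Arguments. Unset Strict Implicit. Unset Printing Implicit Defensive.
Import Order.TTheory GRing.Theory Num.Theory.
Import numFieldNormedType.Exports.
Local Open Scope ring_scope.
Local Open Scope classical_set_scope.

Definition adjacency {R : realType} {N : nat} (A : 'M[R]_N) : Prop :=
  (forall i j, A i j = 0 \/ A i j = 1) /\ (forall i, A i i = 0).

Definition beta_eq {R : realType} (b0 ba k : R) : R :=
  b0 * ((ba / k) / (1 + ba / k)) + ba * (1 / (1 + ba / k)).

Definition nbsum {R : realType} {N : nat} (A : 'M[R]_N) (p : 'cV[R]_N) (i : 'I_N) : R :=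
  \sum_(j < N) A i j * p j 0.

Definition G1 {R : realType} {N : nat} (A : 'M[R]_N) (b0 ba k : R)
  (p r : 'cV[R]_N) : 'cV[R]_N :=
  \col_i (- (b0 + (b0 + ba) / (1 + ba / k)) * p i 0 * nbsum A p i
          - (b0 - ba) * r i 0 * nbsum A p i).

Definition G2 {R : realType} {N : nat} (A : 'M[R]_N) (ba k : R)
  (p r : 'cV[R]_N) : 'cV[R]_N :=
  \col_i (- k * (1 + ba / k) * r i 0 * nbsum A p i).

(* M is Hurwitz: every (complex) eigenvalue a + i b, with eigenvector x + i y != 0,
   has negative real part; written out over the reals:
   M x = a x - b y, M y = b x + a y. *)
Definition hurwitz {R : realType} {N : nat} (M : 'M[R]_N) : Prop :=
  forall (a b : R) (x y : 'cV[R]_N), (x != 0 \/ y != 0) ->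
    M *m x = a *: x - b *: y -> M *m y = b *: x + a *: y -> a < 0.

(* H is a center manifold map of the SAIS system in (p, r) coordinates:
   continuous, H 0 = 0, DH(0) = 0, graph p = H r locally invariant near the origin
   (invariance equation DH(r) rdot = pdot on p = H r), components nonnegative. *)
Definition center_manifold_map {R : realType} {N : nat} (A : 'M[R]_N)
  (b0 ba k delta : R) (H : 'cV[R]_N -> 'cV[R]_N) : Prop :=
  [/\ continuous H,
      H 0 = 0,
      differentiable H 0 /\ (forall v, 'd H 0 v = 0),
      (\forall r \near (0 : 'cV[R]_N),
          differentiable H r /\
          'd H r (G2 A ba k (H r) r) =
            (beta_eq b0 ba k *: A - delta%:M) *m H r + G1 A b0 ba k (H r) r)
    & (forall r i, 0 <= H r i 0)].

Definition Omega {R : realType} {N : nat} (A : 'M[R]_N) (H : 'cV[R]_N -> 'cV[R]_N)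
  : set 'cV[R]_N :=
  [set r : 'cV[R]_N | forall i, r i 0 * nbsum A (H r) i = 0].

(* Main.v *)
Require Import Defs.
From HB Require Import structures.
From mathcomp Require Import all_boot all_order all_algebra.
From mathcomp Require Import all_classical all_reals all_analysis.
From mathcomp Require Import ring lra.
Import Order.TTheory GRing.Theory Num.Theory.
Import numFieldNormedType.Exports.
Local Open Scope ring_scope.
Local Open Scope classical_set_scope.

Lemma mono_cvg (R : realType) (f : R -> R) (a : R) :
  (forall x y, a <= x -> x <= y -> f y <= f x) -> (forall x, a <= x -> 0 <= f x) ->
  exists l : R, f x @[x --> +oo%R] --> l.
Proof.
move=> fdec fge0.
pose u := fun t => - f (Num.max t a).
have ndu : nondecreasing_fun u.
  move=> x y xy; rewrite /u lerN2; apply: fdec; first by rewrite le_max lexx orbT.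
  by rewrite ge_max !le_max xy lexx orbT. 
have ubu : has_ubound (range u).
  by exists 0 => _ [t _ <-]; rewrite /u oppr_le0 fge0 // le_max lexx orbT.
exists (- sup (range u)).
apply: cvg_trans (cvgN (nondecreasing_cvgr ndu ubu)).
apply: (@near_eq_cvg _ _ _ _ (fun t => - u t)); near=> t.
rewrite /u /= opprK max_l //.
Unshelve. all: by end_near. Qed.

Section S.
Variables (R : realType) (f s : R -> R) (a : R).
Hypothesis a0 : a < 0.
Hypothesis D : forall t : R, 0 < t -> is_derive t (1:R) f (a * f t * s t).
Hypothesis s0 : forall t : R, 0 <= s t.

Lemma fcont (t : R) : 0 < t -> {for t, continuous f}.
Proof.
move=> t0; apply: differentiable_continuous; apply/derivable1_diffP.
by have [] := D _ t0.
Qed.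

Lemma gder (t : R) : 0 < t -> is_derive t (1:R) (f * f) (2 * a * (f t * f t) * s t).
Proof.
move=> t0; apply: is_derive_eq; first exact: is_deriveM (D _ t0) (D _ t0).
by rewrite /GRing.scale /=; ring.
Qed.

Lemma gcont_seg (x y : R) : 0 < x -> {within `[x, y], continuous (f * f)}.
Proof.
move=> x0; apply: continuous_in_subspaceT => t; rewrite inE /= in_itv /= => /andP[xt _].
have t0 : 0 < t by exact: lt_le_trans xt.
apply: differentiable_continuous; apply/derivable1_diffP.
by have [] := gder _ t0.
Qed.

Lemma gdec (x y : R) : 0 < x -> x <= y -> f y * f y <= f x * f x.
Proof.
move=> x0 xy.
apply: (@ler0_derive1_nincr R (f * f) x y _ _ (@gcont_seg x y x0) x y (lexx x) xy (lexx y)).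
- move=> t; rewrite in_itv /= => /andP[xt _].
  by have [] := gder _ (lt_trans x0 xt).
- move=> t; rewrite in_itv /= => /andP[xt _].
  have t0 := lt_trans x0 xt.
  rewrite derive1E (@derive_val _ _ _ _ _ _ _ (gder _ t0)).
  have h : 0 <= f t * f t * s t by apply: mulr_ge0 => //; rewrite -expr2 sqr_ge0.
  have -> : 2 * a * (f t * f t) * s t = (2 * a) * (f t * f t * s t) by ring.
  apply: mulr_le0_ge0 => //; rewrite pmulr_rle0 ?ltW // ltr0n.
Qed.

Lemma f_cvg : exists l : R, f x @[x --> +oo%R] --> l.
Proof.
case: (pselect (exists t0, 1 <= t0 /\ f t0 = 0)) => [[t0 [t01 ft0]]|nz].
  exists 0; apply: cvg_near_cst; near=> t.
  have tt0 : t0 <= t by near: t; apply: nbhs_pinfty_ge; exact: num_real.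
  have h := @gdec t0 t (lt_le_trans ltr01 t01) tt0.
  rewrite ft0 mulr0 in h.
  have E : f t * f t = 0 by apply/eqP; rewrite eq_le h /= -expr2 sqr_ge0.
  by move/eqP: E; rewrite mulf_eq0 orbb => /eqP.
have nz' : forall t, 1 <= t -> f t != 0.
  by move=> t t1; apply/eqP => ft0; apply: nz; exists t.
have sgn : forall t, 1 <= t -> 0 < f t * f 1.
  move=> t t1; rewrite ltNge; apply/negP => hle.
  have [c cI fc] : exists2 c, c \in `[1, t]%R & f c = 0.
    apply: (@IVT R f 1 t 0 t1).
      apply: continuous_in_subspaceT => x; rewrite inE /= in_itv /= => /andP[x1 _].
      exact: fcont (lt_le_trans ltr01 x1).
    case: (ltP (f t) 0) => ft; case: (ltP (f 1) 0) => f1.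
    - by exfalso; nra.
    - by rewrite ge_min le_max (ltW ft) f1 !orbT.
    - by rewrite ge_min le_max (ltW f1) ft !orbT.
    - have : f t * f 1 == 0 by rewrite eq_le hle mulr_ge0.
      by rewrite mulf_eq0 (negbTE (nz' _ t1)) (negbTE (nz' _ (lexx 1))).
  move: cI; rewrite in_itv /= => /andP[c1 _].
  by move: (nz' _ c1); rewrite fc eqxx.
case: (ltgtP (f 1) 0) => f1; last by move: (nz' _ (lexx 1)); rewrite f1 eqxx.
- have neg : forall t, 1 <= t -> f t < 0.
    by move=> t t1; have := sgn _ t1; nra.
  have [l hl] : exists l : R, (fun t => - f t) x @[x --> +oo%R] --> l.
    apply: (@mono_cvg _ _ 1).
      move=> x y x1 xy.
      have fx := neg _ x1; have fy := neg _ (le_trans x1 xy).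
      have := @gdec x y (lt_le_trans ltr01 x1) xy; nra.
    by move=> x x1; have := neg _ x1; lra.
  exists (- l); apply: cvg_trans (cvgN hl); apply: near_eq_cvg; near=> t.
  by rewrite /= opprK.
- have pos : forall t, 1 <= t -> 0 < f t.
    by move=> t t1; have := sgn _ t1; nra.
  apply: (@mono_cvg _ _ 1).
    move=> x y x1 xy.
    have fx := pos _ x1; have fy := pos _ (le_trans x1 xy).
    have := @gdec x y (lt_le_trans ltr01 x1) xy; nra.
  by move=> x x1; have := pos _ x1; lra.
Unshelve. all: by end_near. Qed.

Lemma lim_prod (l sg : R) : f x @[x --> +oo%R] --> l -> s x @[x --> +oo%R] --> sg ->
  l * sg = 0.
Proof.
move=> hf hs.
have sg0 : 0 <= sg.
  rewrite -(cvg_lim _ hs) //; apply: limr_ge; first by apply/cvg_ex; exists sg.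
  by near=> t.
pose m := l * l * sg.
have hphi : (fun t => f t * f t * s t) x @[x --> +oo%R] --> m.
  exact: cvgM (cvgM hf hf) hs.
have m0 : 0 <= m.
  by apply: mulr_ge0 => //; nra.
case: (ltgtP m 0) => [|mpos|m00]; first by rewrite ltNge m0.
  exfalso.
  have hm2 : 0 < m / 2 by rewrite divr_gt0.
  move/cvgrPdist_lt: hphi => /(_ _ hm2) [M [_ HM]].
  pose T := Num.max M 0 + 1.
  have TM : M < T by rewrite /T ltr_pwDr // le_max lexx.
  have T0 : 0 < T by rewrite /T ltr_pwDr // le_max lexx orbT.
  have phT : forall t, T <= t -> m / 2 < f t * f t * s t.
    move=> t Tt; have := HM t (lt_le_trans TM Tt).
    rewrite /= ltr_distlC => /andP[h _]; lra.
  pose t1 := T + (f T * f T) / (- a * m) + 1.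
  have cpos : 0 < - a * m by rewrite mulr_gt0 // oppr_gt0.
  have gT0 : 0 <= (f T * f T) / (- a * m) by apply: divr_ge0; [nra | exact: ltW].
  have Tt1 : T <= t1 by rewrite /t1; lra.
  have [xi xiI E] := @MVT_segment R (f * f) (fun t => 2 * a * (f t * f t) * s t) T t1 Tt1
    (fun x xI => @gder x (lt_trans T0 (andP xI).1)) (@gcont_seg T t1 T0).
  move: xiI; rewrite in_itv /= => /andP[Txi _].
  have px := phT _ Txi.
  have g1 : 0 <= f t1 * f t1 by nra.
  have E2 : f t1 * f t1 - f T * f T = 2 * a * (f xi * f xi * s xi) * (t1 - T).
    by rewrite mulrA; exact: E.
  have HQ : (f T * f T) / (- a * m) * (- a * m) = f T * f T by rewrite mulfVK // gt_eqF.
  have Ht : t1 - T = (f T * f T) / (- a * m) + 1 by rewrite /t1; ring.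
  rewrite Ht in E2.
  move: E2 px g1 gT0 cpos a0 mpos HQ.
  set F1 := f t1 * f t1; set FT := f T * f T; set P := f xi * f xi * s xi; set Q := FT / (- a * m).
  move=> E2 px g1 gT0 cpos a00 mpos HQ.
  have h0 : a * (2 * P - m) < 0 by nra.
  have h1 : a * (2 * P - m) * (Q + 1) < 0 by nra.
  have h2 : a * m < 0 by nra.
  nra.
move: m00; rewrite /m => /eqP; rewrite !mulf_eq0 orbb => /orP[/eqP->|/eqP->]; by rewrite ?mul0r ?mulr0.
Unshelve. all: by end_near. Qed.
End S.

Lemma entry_le (R : realType) (m n : nat) (x : 'M[R]_(m, n)) i j : `|x i j| <= `|x|.
Proof.
rewrite [leRHS]/Num.Def.normr/= mx_normrE.
exact: (le_bigmax 0 (fun ij : 'I_m * 'I_n => `|x ij.1 ij.2|) (i, j)).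
Qed.

Lemma entry_cvg (R : realType) (N : nat) (M : R -> 'cV[R]_N) (M0 : 'cV[R]_N) j :
  M t @[t --> +oo%R] --> M0 -> M t j 0 @[t --> +oo%R] --> M0 j 0.
Proof.
move=> hM; apply/cvgrPdist_lt => eps eps0.
move/cvgrPdist_lt: hM => /(_ eps eps0); apply: filterS => t ht.
apply: le_lt_trans ht.
by have := @entry_le R N 1 (M0 - M t) j 0; rewrite !mxE.
Qed.

Lemma cvg_bigsum (R : realType) (I : Type) (F : I -> R -> R) (l : I -> R) (r : seq I) :
  (forall j, F j t @[t --> +oo%R] --> l j) ->
  (\sum_(j <- r) F j t) @[t --> +oo%R] --> \sum_(j <- r) l j.
Proof.
move=> hF; elim: r => [|x r IH].
  rewrite big_nil; apply: cvg_near_cst; near=> t; by rewrite big_nil.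
rewrite big_cons.
have -> : (fun t => \sum_(j <- x :: r) F j t) = (fun t => F x t + \sum_(j <- r) F j t).
  by apply/funext => t; rewrite big_cons.
exact: cvgD (hF x) IH.
Unshelve. all: by end_near. Qed.
Theorem lemma1 (R : realType) (N : nat) (A : 'M[R]_N) (b0 ba k delta : R)
  (H : 'cV[R]_N -> 'cV[R]_N) (rh : R -> 'cV[R]_N) :
  adjacency A ->
  0 < b0 -> 0 < delta -> 0 < k -> 0 <= ba -> ba < b0 ->
  hurwitz (beta_eq b0 ba k *: A - delta%:M) ->
  center_manifold_map A b0 ba k delta H ->
  (forall t : R, 0 < t ->
     is_derive t 1 rh (\col_i (- k * (1 + ba / k) * rh t i 0 * nbsum A (H (rh t)) i))) ->
  forall e : R, 0 < e ->
    \forall t \near +oo%R, exists w : 'cV[R]_N, Omega A H w /\ `|rh t - w| < e.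
Proof.
move=> [A01 Aii] b00 d0 k0 ba0 bab _ [Hc _ _ _ Hpos] Hd e e0.
pose a := - k * (1 + ba / k).
have a0 : a < 0.
  have hk : 0 <= ba / k by rewrite divr_ge0 // ltW.
  rewrite /a; move: hk; set x := ba / k => hk; nra.
pose sf (i : 'I_N) (t : R) := nbsum A (H (rh t)) i.
have Ag0 : forall i j, 0 <= A i j by move=> i j; case: (A01 i j) => ->.
have s0 : forall i t, 0 <= sf i t.
  by move=> i t; apply: sumr_ge0 => j _; apply: mulr_ge0.
have Di : forall (i : 'I_N) (t : R), 0 < t -> is_derive t (1:R) (fun t => rh t i 0) (a * rh t i 0 * sf i t).
  move=> i t t0; have [dr dv] := Hd t t0; apply: DeriveDef.
    by move/derivable_mxP: dr; apply.
  have := derive_mx dr; rewrite dv => /matrixP /(_ i 0); rewrite !mxE => <-.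
  by [].
have Lim : forall i : 'I_N, exists l : R, rh t i 0 @[t --> +oo%R] --> l.
  by move=> i; exact: (@f_cvg R _ (sf i) a a0 (Di i) (s0 i)).
have [Lf HLf] := choice Lim.
pose rs : 'cV[R]_N := \col_i Lf i.
have Hr : rh t @[t --> +oo%R] --> rs.
  apply/cvgrPdist_lt => eps eps0.
  have : \forall t \near +oo%R, forall i : 'I_N, `|Lf i - rh t i 0| < eps.
    apply: filter_forall => i; exact: (cvgrPdist_lt _ _).1 (HLf i) eps eps0.
  apply: filterS => t ht.
  rewrite [X in X < _]/Num.Def.normr /= mx_normrE.
  apply: bigmax_lt => // -[i j] _ /=.
  by rewrite (ord1 j) !mxE.
have HH : H (rh t) @[t --> +oo%R] --> H rs.
  exact: (cvg_comp _ _ Hr (Hc rs)).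
have Hs : forall i, sf i t @[t --> +oo%R] --> nbsum A (H rs) i.
  move=> i; rewrite /sf /nbsum.
  apply: (@cvg_bigsum R _ (fun j t => A i j * H (rh t) j 0) (fun j => A i j * H rs j 0)).
  move=> j; apply: cvgM; first exact: cvg_cst.
  exact: entry_cvg HH.
have Om : Omega A H rs.
  move=> i; rewrite /rs mxE.
  exact: (@lim_prod R _ (sf i) a a0 (Di i) (s0 i) _ _ (HLf i) (Hs i)).
move/cvgrPdist_lt: Hr => /(_ e e0); apply: filterS => t ht.
by exists rs; split => //; rewrite distrC.
Qed.
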